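(* Let $S,T,V$ be ordered trees, let $w\in T$, and let $f\colon T^w\to S$ and $g\colon V\to T$ be rigid surjections. Let $i$ be the injection of $f$ and let $v\in S$. Then \[ f^v\circ g^{i(v)} = (f\circ g^w)^v. \]
   Context: A tree is a finite, non-empty partially ordered set $(T,\sqsubseteq_T)$ with a smallest element (the root) such that the set of predecessors of each element is linearly ordered; each node counts as its own predecessor and successor. $v\wedge_T w$ is the $\sqsubseteq_T$-largest common predecessor. A tree is ordered if the immediate successors of each node carry a fixed linear order; this induces the lexicographic linear order $\leq_T$: $v\leq_T w$ if $v\sqsubseteq_T w$, and for incomparable $v,w$, $v\leq_T w$ iff the immediate successor of $v\wedge_T w$ below $v$ precedes the one below $w$. A morphism $e\colon S\to T$ satisfies $e(v\wedge_S w)=e(v)\wedge_T e(w)$, is monotone from $\leq_S$ to $\leq_T$, and maps root to root. A function $f\colon T\to S$ is a rigid surjection if there is a morphism $e\colon S\to T$ with $f\circ e={\rm id}_S$ and $e(f(w))\sqsubseteq_T w$ for all $w$; this $e$ is unique and called the injection of $f$. For $v\in T$, $T^v=\{u\in T\mid u\leq_T v\}$, an ordered tree with inherited orders. For a rigid surjection $f\colon T\to S$ with injection $i$ and $v\in S$, $f^v=f\upharpoonright T^{i(v)}$; its image is $S^v$. *)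

(* Defs.v *)
From mathcomp Require Import all_boot finmap.
Set Implicit Arguments. Unset Strict Implicit. Unset Printing Implicit Defensive.
Local Open Scope fset_scope.

(* An ordered tree is represented (up to isomorphism) as a finite set of
   addresses [seq nat], containing the root [::] and closed under taking
   prefixes. The tree order is the prefix order; the immediate successors
   of a node s are the nodes rcons s x, linearly ordered by x. *)
Definition node := seq nat.
Definition otree := {fset node}.

Definition is_tree (T : otree) : Prop :=
  [::] \in T /\ forall (s : node) (x : nat), rcons s x \in T -> s \in T.

Definition tle (v w : node) : bool := prefix v w.

Fixpoint tmeet (v w : node) : node :=
  match v, w with
  | x :: v', y :: w' => if x == y then x :: tmeet v' w' else [::]
  | _, _ => [::]
  end.

(* lexicographic linear order <=_T induced by the sibling orders *)
Fixpoint lexle (v w : node) : bool :=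
  match v, w with
  | [::], _ => true
  | _ :: _, [::] => false
  | x :: v', y :: w' => if x == y then lexle v' w' else (x < y)%N
  end.

Definition is_morphism (S T : otree) (e : node -> node) : Prop :=
  [/\ {in S, forall v, e v \in T},
      {in S &, forall v w, e (tmeet v w) = tmeet (e v) (e w)},
      {in S &, forall v w, lexle v w -> lexle (e v) (e w)} &
      e [::] = [::]].

Definition is_injection (T S : otree) (f : node -> node) (e : node -> node) : Prop :=
  [/\ {in T, forall w, f w \in S},
      is_morphism S T e,
      {in S, forall v, f (e v) = v} &
      {in T, forall w, tle (e (f w)) w}].

Definition rigid_surj (T S : otree) (f : node -> node) : Prop :=
  exists e, is_injection T S f e.

Definition subtree (T : otree) (v : node) : otree := [fset u in T | lexle u v].

Definition map_eq (D1 : otree) (f1 : node -> node) (D2 : otree) (f2 : node -> node)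
  : Prop := D1 = D2 /\ {in D1, f1 =1 f2}.

(* Main.v *)
Require Import Defs.
From mathcomp Require Import all_boot finmap zify.
Local Open Scope fset_scope.

Lemma lexle_refl a : lexle a a.
Proof. by elim: a => //= x a IH; rewrite eqxx. Qed.

Lemma lexle_trans b a c : lexle a b -> lexle b c -> lexle a c.
Proof.
elim: b a c => [|y b IH] [|x a] [|z c] //=.
do 3 case: eqP => ?; subst => //; try (move=> h1 h2; lia).
exact: IH.
Qed.

Lemma lexle_total a b : lexle a b || lexle b a.
Proof.
elim: a b => [|x a IH] [|y b] //=.
rewrite eq_sym; case: eqP => [_|nxy]; first exact: IH.
apply/orP; lia.
Qed.

Lemma lexle_anti a b : lexle a b -> lexle b a -> a = b.
Proof.
elim: a b => [|x a IH] [|y b] //=.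
rewrite eq_sym; case: eqP => [->|nxy]; first by move=> h1 h2; rewrite (IH b).
lia.
Qed.

Lemma prefix_lexle a b : prefix a b -> lexle a b.
Proof.
elim: a b => [|x a IH] [|y b] //=.
by move=> /andP[/eqP -> /IH]; rewrite eqxx.
Qed.

Lemma tmeet_prefix a b : prefix a b -> tmeet a b = a.
Proof.
elim: a b => [|x a IH] [|y b] //=.
by move=> /andP[/eqP -> /IH ->]; rewrite eqxx.
Qed.

Lemma tmeet_prefixr a b : prefix (tmeet a b) b.
Proof.
elim: a b => [|x a IH] [|y b] //=.
case: eqP => [->|_] //=; by rewrite eqxx IH.
Qed.

Lemma in_subtree (T : otree) w u : (u \in subtree T w) = (u \in T) && lexle u w.
Proof. by rewrite /subtree !inE. Qed.

Lemma prefix_anti (a b : node) : prefix a b -> prefix b a -> a = b.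
Proof. by move=> /prefix_lexle h1 /prefix_lexle h2; apply: lexle_anti. Qed.

Theorem lemma4p4 (S T V : otree) (w : node) (f g i j : node -> node) (v : node) :
  is_tree S -> is_tree T -> is_tree V -> w \in T ->
  is_injection (subtree T w) S f i ->
  is_injection V T g j ->
  v \in S ->
  rigid_surj (subtree V (j w)) S (f \o g) /\
  forall k, is_injection (subtree V (j w)) S (f \o g) k ->
    map_eq (subtree V (j (i v))) (f \o g)
           (subtree (subtree V (j w)) (k v)) (f \o g).
Proof.
move=> _ _ _ hw [fS [iS i_meet i_mono i_root] fi ifl] [gT [jT j_meet j_mono j_root] gj jgl] hv.
have jpre : {in T &, forall a b, prefix a b -> prefix (j a) (j b)}.
  move=> a b ha hb hab; rewrite -(tmeet_prefix _ _ hab) j_meet //; exact: tmeet_prefixr.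
have gmap : forall u, u \in subtree V (j w) -> g u \in subtree T w.
  move=> u; rewrite !in_subtree => /andP[uV ujw]; rewrite gT //=.
  case/orP: (lexle_total (g u) w) => // hwg.
  have h1 := j_mono _ _ hw (gT _ uV) hwg.
  have h2 : lexle (j (g u)) (j w) := lexle_trans _ _ _ (prefix_lexle _ _ (jgl _ uV)) ujw.
  have e := lexle_anti _ _ h1 h2.
  by rewrite -(gj _ hw) e (gj _ (gT _ uV)) lexle_refl.
have iST : forall s, s \in S -> i s \in T.
  by move=> s /iS; rewrite in_subtree => /andP[].
have iSw : forall s, s \in S -> lexle (i s) w.
  by move=> s /iS; rewrite in_subtree => /andP[].
have kin : forall s, s \in S -> j (i s) \in subtree V (j w).
  move=> s hs; rewrite in_subtree jT ?iST //=; exact: j_mono (iST _ hs) hw (iSw _ hs).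
have klast : {in subtree V (j w), forall u, tle (j (i ((f \o g) u))) u}.
  move=> u hu; have hg := gmap _ hu.
  have uV : u \in V by move: hu; rewrite in_subtree => /andP[].
  apply: prefix_trans (jgl _ uV).
  apply: jpre; [apply: iST; exact: fS | by apply: gT | exact: ifl].
split.
  exists (fun s => j (i s)); split.
  - move=> u hu /=; exact: fS (gmap _ hu).
  - split.
    + exact: kin.
    + move=> a b ha hb; rewrite i_meet // j_meet //; exact: iST.
    + move=> a b ha hb hab; apply: j_mono; [exact: iST|exact: iST|exact: i_mono].
    + by rewrite i_root j_root.
  - move=> s hs /=; rewrite gj ?iST // fi //.
  - exact: klast.
move=> k [kf [kS k_meet k_mono k_root] fk kfl].
have ekv : k v = j (i v).
  apply: prefix_anti.
    have := kfl _ (kin _ hv); by rewrite /= gj ?iST // fi.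
  have := klast _ (kS _ hv); by rewrite fk.
split=> //; rewrite ekv; apply/fsetP => u; rewrite !in_subtree.
have := kin _ hv; rewrite in_subtree => /andP[_ hjw].
apply/idP/idP.
  move=> /andP[-> hu] /=; rewrite hu andbT; exact: lexle_trans _ _ _ hu hjw.
by move=> /andP[/andP[-> _] ->].
Qed.
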